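(* Let $\mathcal{H}\subseteq\mathcal{G}$ be a dense subsemigroup, let $k\ge2$, let $S\subseteq\mathcal{H}$ be strongly $k$-product-free, and let $W\subseteq S$ be a finite subset with unique products in $\mathcal{H}$. Then \[\bar{d}_{\mathcal{H}}(S)\le \frac{1}{1+\frac{\mu(W)}{M}+\cdots+\left(\frac{\mu(W)}{M}\right)^{k-1}}.\]
   Context: $\mathcal{A}$ is a finite alphabet with $|\mathcal{A}|\ge2$, $\mathcal{F}$ the free group over $\mathcal{A}$, elements identified with reduced words, $|w|$ the reduced length. Fix $x,y\in\mathcal{A}\cup\mathcal{A}^{-1}$ with $x\ne y^{-1}$, and let $\mathcal{G}$ be the subsemigroup of $\mathcal{F}$ consisting of reduced words beginning with $x$ and ending with $y$, together with the empty word. $M=\frac{2|\mathcal{A}|}{2|\mathcal{A}|-1}$. The measure $\mu$ on $\mathcal{F}$ is $\mu(\{w\})=\frac{1}{2|\mathcal{A}|(2|\mathcal{A}|-1)^{|w|-1}}$ for nonempty $w$ (each length layer has total weight one), extended additively to sets. For $A\subseteq\mathcal{F}$, $A_{\le n}=\{w\in A:|w|\le n\}$; for $A\subseteq\mathcal{H}$, $\bar{d}_{\mathcal{H}}(A)=\limsup_{n\to\infty}\mu(A_{\le n})/\mu(\mathcal{H}_{\le n})$. $\mathcal{H}$ is dense if there is a fixed $\delta>0$ with $\mu(\mathcal{H}_{\le n})>\delta\mu(\mathcal{F}_{\le n})>0$ for all large $n$; it is a subsemigroup if $\alpha\beta\in\mathcal{H}$ for all $\alpha,\beta\in\mathcal{H}$.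 $W\subseteq\mathcal{H}$ has unique products in $\mathcal{H}$ if the map $W\times\mathcal{H}\to\mathcal{H}$, $(w,h)\mapsto wh$, is injective. A set is strongly $k$-product-free if for every $2\le\ell\le k$ there are no $x_1,\dots,x_\ell,z$ in it with $x_1\cdots x_\ell=z$. *)

(* Defs.v *)
From HB Require Import structures.
From mathcomp Require Import all_boot all_order all_algebra.
From mathcomp Require Import all_classical all_reals all_analysis.
Set Implicit Arguments. Unset Strict Implicit. Unset Printing Implicit Defensive.
Import Order.TTheory GRing.Theory Num.Theory.
Local Open Scope ring_scope.

Section FreeGroup.
Variable A : finType.

(* a letter is a generator (a, false) or its inverse (a, true) *)
Definition letter := (A * bool)%type.
Definition linv (x : letter) : letter := (x.1, ~~ x.2).
Definition word := seq letter.

Fixpoint reduced (w : word) : bool :=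
  match w with
  | x :: ((y :: _) as w') => (y != linv x) && reduced w'
  | _ => true
  end.

Definition push (x : letter) (w : word) : word :=
  match w with
  | y :: w' => if y == linv x then w' else x :: w
  | [::] => [:: x]
  end.
Definition reduce (w : word) : word := foldr push [::] w.

Definition fmul (u v : word) : word := reduce (u ++ v).
Definition fprod (xs : seq word) : word := foldr fmul [::] xs.

(* the semigroup G: reduced words starting with x and ending with y, plus empty word *)
Definition Gset (x y : letter) : pred word :=
  fun w => (w == [::]) || [&& reduced w, head x w == x & last y w == y].

Definition subsemigroup (H : pred word) : Prop :=
  forall a b, H a -> H b -> H (fmul a b).

Variable R : realType.

Definition two_a : R := (2 * #|A|)%:R.

(* point mass of mu; the empty word (length layer 0) gets mass 1 *)
Definition mu_pt (w : word) : R :=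
  if w is [::] then 1 else 1 / (two_a * (two_a - 1) ^+ (size w).-1).

Definition mu_le (S : pred word) (n : nat) : R :=
  \sum_(l < n.+1) \sum_(t : l.-tuple letter | reduced t && S t) mu_pt t.

(* mu of a finite set given as a duplicate-free list *)
Definition mu_fin (W : seq word) : R := \sum_(w <- W) mu_pt w.

Definition Mconst : R := two_a / (two_a - 1).

Definition dense_in_F (H : pred word) : Prop :=
  exists delta : R, 0 < delta /\
    exists N, forall n, (N <= n)%N ->
      delta * mu_le (fun _ => true) n < mu_le H n /\ 0 < delta * mu_le (fun _ => true) n.

Definition upper_density (H S : pred word) : \bar R :=
  limn_esup (fun n => (mu_le S n / mu_le H n)%:E).

Definition unique_products (H : pred word) (W : seq word) : Prop :=
  forall w1 w2 h1 h2, w1 \in W -> w2 \in W -> H h1 -> H h2 ->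
    fmul w1 h1 = fmul w2 h2 -> w1 = w2 /\ h1 = h2.

Definition strongly_product_free (k : nat) (S : pred word) : Prop :=
  forall l, (2 <= l <= k)%N -> forall xs : seq word,
    size xs = l -> all S xs -> ~~ S (fprod xs).

End FreeGroup.

(* Main.v *)
Require Import Defs.
From HB Require Import structures.
From mathcomp Require Import all_boot all_order all_algebra.
From mathcomp Require Import all_classical all_reals all_analysis.
From mathcomp Require Import ring lra zify.
Import Order.TTheory GRing.Theory Num.Theory.
Local Open Scope ring_scope.

Lemma linvK (A : finType) : involutive (@linv A).
Proof. by case=> a b; rewrite /linv /= negbK. Qed.

Lemma linv_eq (A : finType) (a b : letter A) : (b == linv a) = (a == linv b).
Proof. by apply/eqP/eqP => ->; rewrite linvK. Qed.

Lemma reduced_cons (A : finType) (z : letter A) t :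
  reduced (z :: t) = (if t is b :: _ then b != linv z else true) && reduced t.
Proof. by case: t. Qed.

Lemma reduce_id (A : finType) (w : word A) : reduced w -> reduce w = w.
Proof.
elim: w => // a w IH; rewrite reduced_cons => /andP[c rw].
rewrite /reduce /= -/(reduce w) IH //.
by case: w c {IH rw} => //= b w /negbTE ->.
Qed.

Lemma reduced_cat (A : finType) (u v : word A) a b :
  reduced (a :: u) -> reduced (b :: v) -> b != linv (last a u) ->
  reduced (a :: u ++ b :: v).
Proof.
elim: u a => [|c u IH] a; first by move=> _ rv h; rewrite cat0s reduced_cons rv andbT.
rewrite reduced_cons => /andP[ca ru] rv h.
by rewrite cat_cons reduced_cons ca IH.
Qed.

Lemma uniq_flatten_map (T U : eqType) (f : T -> seq U) s :
  uniq s -> (forall x, x \in s -> uniq (f x)) ->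
  (forall x x' u, x \in s -> x' \in s -> u \in f x -> u \in f x' -> x = x') ->
  uniq (flatten (map f s)).
Proof.
elim: s => //= x s IH /andP[xs us] Hf Hg.
rewrite cat_uniq Hf ?mem_head // IH //; last 2 first.
- by move=> y ys; apply: Hf; rewrite in_cons ys orbT.
- by move=> y y' u ys ys'; apply: Hg; rewrite in_cons ?ys ?ys' orbT.
rewrite andbT; apply/hasPn => u /flatten_mapP[x' x's ux'].
apply/negP => ux; have ex := Hg x x' u (mem_head _ _) _ ux ux'.
by move: xs; rewrite ex ?x's // in_cons x's orbT.
Qed.

Fixpoint Rl (A : finType) (l : nat) : seq (word A) :=
  if l is l'.+1 then
    flatten [seq [seq z :: t | z <- index_enum (letter A) &
                   (if t is b :: _ then b != linv z else true)] | t <- Rl A l']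
  else [:: [::]].

Lemma mem_Rl (A : finType) l (w : word A) : (w \in Rl A l) = reduced w && (size w == l).
Proof.
elim: l w => [|l IH] [|z t].
- by [].
- by rewrite in_cons in_nil orbF andbF.
- by apply/flatten_mapP => -[t' _ /mapP[? _]].
apply/idP/idP.
- case/flatten_mapP => t' Ht' /mapP[z' Hz' [-> ->]].
  move: Hz'; rewrite mem_filter => /andP[c _].
  by rewrite reduced_cons c /= -IH.
- rewrite reduced_cons /= eqSS => /andP[/andP[c rt] sz].
  apply/flatten_mapP; exists t; first by rewrite IH rt.
  by apply/mapP; exists z => //; rewrite mem_filter c mem_index_enum.
Qed.

Lemma uniq_Rl (A : finType) l : uniq (Rl A l).
Proof.
elim: l => //= l IH; apply: uniq_flatten_map => //.
- move=> t _; rewrite map_inj_uniq ?filter_uniq ?index_enum_uniq //.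
  by move=> ? ? [].
- by move=> t t' u _ _ /mapP[? _ ->] /mapP[? _ []].
Qed.

Lemma two_a_ge (A : finType) (R : realType) : (2 <= #|A|)%N -> 4 <= two_a A R.
Proof. by move=> h; rewrite /two_a ler_nat; lia. Qed.


Lemma mu_pt_ge0 (A : finType) (R : realType) (w : word A) :
  (2 <= #|A|)%N -> 0 <= mu_pt R w.
Proof.
move=> h; have := two_a_ge A R h; case: w => [|a w] /= t4; first exact: ler01.
rewrite div1r invr_ge0 mulr_ge0 // ?exprn_ge0 //.
by rewrite subr_ge0 (le_trans _ t4) // ler1n.
Qed.

Lemma card_letter (A : finType) : #|{: letter A}| = (#|A| * 2)%N.
Proof. by rewrite card_prod card_bool. Qed.

Lemma inner_mass (A : finType) (R : realType) (t : word A) :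
  (2 <= #|A|)%N ->
  \sum_(z <- index_enum (letter A) | if t is b :: _ then b != linv z else true)
     mu_pt R (z :: t) = mu_pt R t.
Proof.
move=> hA; have t4 := two_a_ge A R hA.
have e : ((#|A| * 2).-1)%:R = two_a A R - 1 :> R.
  rewrite -subn1 natrB; last by rewrite muln_gt0; apply/andP; split => //; apply: leq_trans hA.
  by rewrite /two_a mulnC.
case: t => [|b t].
- rewrite /= sumr_const (_ : #|xpredT| = #|{: letter A}|) // card_letter.
  rewrite expr0 mulr1 -mulr_natr /two_a mulnC div1r mulVf //.
  rewrite pnatr_eq0; lia.
- rewrite (eq_bigl (fun z => z \in predC1 (linv b))); last first.
    by move=> z; rewrite !inE linv_eq.
  rewrite (eq_bigr (fun _ => 1 / (two_a A R * (two_a A R - 1) ^+ (size t).+1))) //.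
  rewrite sumr_const cardC1 card_letter -mulr_natr e /= exprS.
  have h1 : two_a A R - 1 != 0 by apply/eqP => h0; lra.
  have h2 : two_a A R != 0 by apply/eqP => h0; lra.
  field; rewrite expf_neq0 //=; apply/andP; split; first by rewrite pnatr_eq0 -lt0n (leq_trans _ hA).
  by move: h1; rewrite /two_a natrM.
Qed.

Lemma Rl_mass (A : finType) (R : realType) l :
  (2 <= #|A|)%N -> \sum_(w <- Rl A l) mu_pt R w = 1.
Proof.
move=> hA; elim: l => [|l IH]; first by rewrite big_seq1.
rewrite /= big_flatten big_map -IH; apply: eq_bigr => t _.
by rewrite big_map big_filter inner_mass.
Qed.

Lemma layerE (A : finType) (R : realType) (P : pred (word A)) l :
  \sum_(t : l.-tuple (letter A) | reduced t && P t) mu_pt R t =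
  \sum_(w <- Rl A l | P w) mu_pt R w.
Proof.
transitivity (\sum_(w <- map (fun t : l.-tuple (letter A) => val t)
                     (index_enum {: l.-tuple (letter A)}) | reduced w && P w) mu_pt R w).
  by rewrite big_map.
rewrite -big_filter -[RHS]big_filter; apply: perm_big; apply: uniq_perm.
- by rewrite filter_uniq // map_inj_uniq ?index_enum_uniq //; exact: val_inj.
- by rewrite filter_uniq // uniq_Rl.
move=> w; rewrite !mem_filter mem_Rl.
have -> : (w \in map (fun t : l.-tuple (letter A) => val t)
                     (index_enum {: l.-tuple (letter A)})) = (size w == l).
  apply/mapP/idP => [[t _ ->]|sw]; first by rewrite size_tuple.
  by exists (Tuple sw); rewrite ?mem_index_enum.
by case: (reduced w); case: (P w).
Qed.

Definition Fn (A : finType) n : seq (word A) := flatten [seq Rl A l | l <- iota 0 n.+1].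

Lemma mem_Fn (A : finType) n (w : word A) : (w \in Fn A n) = reduced w && (size w <= n)%N.
Proof.
apply/flatten_mapP/andP => [[l]|[rw sw]].
  by rewrite mem_iota mem_Rl => /andP[_ ln] /andP[-> /eqP ->].
by exists (size w); rewrite ?mem_iota ?mem_Rl ?rw ?eqxx.
Qed.

Lemma uniq_Fn (A : finType) n : uniq (Fn A n).
Proof.
apply: uniq_flatten_map; rewrite ?iota_uniq //; first by move=> l _; exact: uniq_Rl.
by move=> l l' u _ _; rewrite !mem_Rl => /andP[_ /eqP <-] /andP[_ /eqP <-].
Qed.

Lemma mu_leE (A : finType) (R : realType) (P : pred (word A)) n :
  mu_le R P n = \sum_(w <- Fn A n | P w) mu_pt R w.
Proof.
rewrite /mu_le /Fn big_flatten big_map.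
rewrite (eq_bigr (fun l : 'I_n.+1 => \sum_(w <- Rl A l | P w) mu_pt R w)); last first.
  by move=> l _; rewrite layerE.
by rewrite -(big_mkord xpredT (fun l => \sum_(w <- Rl A l | P w) mu_pt R w)) /index_iota subn0.
Qed.

Lemma layer_le1 (A : finType) (R : realType) (P : pred (word A)) l :
  (2 <= #|A|)%N -> \sum_(w <- Rl A l | P w) mu_pt R w <= 1.
Proof.
move=> hA; rewrite -(Rl_mass A R l hA) big_mkcond /=; apply: ler_sum => w _.
by case: (P w) => //; exact: mu_pt_ge0.
Qed.

Lemma mu_le_true (A : finType) (R : realType) n :
  (2 <= #|A|)%N -> mu_le R (fun _ : word A => true) n = n.+1%:R.
Proof.
move=> hA; rewrite /mu_le (eq_bigr (fun _ => 1)); last first.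
  by move=> l _; have := layerE A R (fun _ => true) l; rewrite Rl_mass // => <-.
by rewrite sumr_const card_ord.
Qed.

Lemma mu_le_ge0 (A : finType) (R : realType) (P : pred (word A)) n :
  (2 <= #|A|)%N -> 0 <= mu_le R P n.
Proof.
by move=> hA; rewrite mu_leE; apply: sumr_ge0 => w _; exact: mu_pt_ge0.
Qed.

Lemma mu_le_shift (A : finType) (R : realType) (P : pred (word A)) n c :
  (2 <= #|A|)%N -> mu_le R P (n + c) <= mu_le R P n + c%:R.
Proof.
move=> hA; elim: c => [|c IH]; first by rewrite addn0 addr0.
rewrite /mu_le addnS big_ord_recr /= -/(mu_le R P (n + c)) layerE -natr1 addrA.
by apply: lerD => //; exact: layer_le1.
Qed.

Lemma fmul_cat (A : finType) (x y : letter A) (hxy : x != linv y) (w t : word A) :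
  Gset x y w -> Gset x y t -> w != [::] -> t != [::] -> fmul w t = w ++ t.
Proof.
case: w => [|a w] //; case: t => [|b t] //.
move=> /orP[//|/and3P[rw _ lw]] /orP[//|/and3P[rt hb _]] _ _.
move: lw hb => /= /eqP lw /eqP hb.
by rewrite /fmul reduce_id // cat_cons reduced_cat // hb lw.
Qed.

Lemma fmul_nil (A : finType) (x y : letter A) (s : word A) :
  Gset x y s -> fmul s [::] = s.
Proof.
by rewrite /fmul cats0 => /orP[/eqP -> //|/and3P[r _ _]]; exact: reduce_id.
Qed.

Lemma mu_pt_cat (A : finType) (R : realType) (w t : word A) :
  (2 <= #|A|)%N -> w != [::] -> t != [::] ->
  mu_pt R (w ++ t) = Mconst A R * mu_pt R w * mu_pt R t.
Proof.
move=> hA; have t4 := two_a_ge A R hA.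
have h1 : two_a A R - 1 != 0 by apply/eqP => h0; lra.
have h2 : two_a A R != 0 by apply/eqP => h0; lra.
case: w => [|a w] //; case: t => [|b t] // _ _.
rewrite cat_cons /= size_cat /= addnS exprS exprD /Mconst.
move: h1 h2; generalize (two_a A R) => aa h1 h2.
by field; rewrite h2 h1 !expf_neq0.
Qed.

Lemma sub_sum (T : eqType) (R : realType) (f : T -> R) s r :
  uniq s -> uniq r -> {subset s <= r} -> (forall x, 0 <= f x) ->
  \sum_(x <- s) f x <= \sum_(x <- r) f x.
Proof.
move=> us ur sr f0.
have e : \sum_(x <- r | x \in s) f x = \sum_(x <- s) f x.
  rewrite -big_filter; apply: perm_big; apply: uniq_perm; rewrite ?filter_uniq //.
  move=> x; rewrite mem_filter; apply/andP/idP => [[]//|xs]; split=> //; exact: sr.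
rewrite [X in _ <= X](bigID (fun x => x \in s)) /= e lerDl.
by apply: sumr_ge0.
Qed.

Set Implicit Arguments. Unset Strict Implicit.

Fixpoint Lj (A : finType) (S : pred (word A)) (W : seq (word A)) (m j : nat) : seq (word A) :=
  if j is j'.+1 then [seq fmul w t | w <- W, t <- Lj S W m j'] else [seq w <- Fn A m | S w].

Definition Lmax (A : finType) (W : seq (word A)) := (\max_(w <- W) size w)%N.
Arguments Lj {A}.
Arguments Lmax {A}.

Lemma Lj0 (A : finType) (S : pred (word A)) W m : Lj S W m 0 = [seq w <- Fn A m | S w].
Proof. by []. Qed.
Lemma LjS (A : finType) (S : pred (word A)) W m j :
  Lj S W m j.+1 = [seq fmul w t | w <- W, t <- Lj S W m j].
Proof. by []. Qed.

Lemma LjP (A : finType) (x y : letter A) (H S : pred (word A)) (W : seq (word A)) m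
  (hxy : x != linv y) (hHG : forall w, H w -> Gset x y w) (hHsemi : subsemigroup H)
  (hSH : forall w, S w -> H w) (hS0 : ~~ S [::]) (hWS : all S W) j u :
  u \in Lj S W m j ->
  [/\ H u, u != [::], (size u <= m + j * Lmax W)%N &
     exists ws s, [/\ size ws = j, all (fun w => w \in W) ws, S s & u = foldr (@fmul A) s ws]].
Proof.
elim: j u => [|j IH] u; rewrite ?Lj0 ?LjS.
  rewrite mem_filter mem_Fn => /andP[Su /andP[_ su]]; split.
  - exact: hSH.
  - by apply: contraNneq hS0 => <-.
  - by rewrite mul0n addn0.
  - by exists [::], u.
case/allpairsP => -[w t] /= [wW tL ->].
have [Ht tne st [ws [s [sz aw Ss et]]]] := IH t tL.
have Sw : S w := allP hWS w wW.
have Hw := hSH w Sw.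
have wne : w != [::] by apply: contraNneq hS0 => <-.
have ec := @fmul_cat _ _ _ hxy _ _ (hHG _ Hw) (hHG _ Ht) wne tne.
split.
- exact: hHsemi.
- by rewrite ec; move: wne; case: (w).
- rewrite ec size_cat mulSn.
  have : (size w <= Lmax W)%N by apply: (@leq_bigmax_seq _ _ xpredT (fun w => size w)).
  by move=> hw; rewrite addnCA; apply: leq_add hw st.
- by exists (w :: ws), s; split => //=; [rewrite sz | rewrite wW aw | rewrite et].
Qed.

Lemma uniq_Lj (A : finType) (x y : letter A) (H S : pred (word A)) (W : seq (word A)) m
  (hxy : x != linv y) (hHG : forall w, H w -> Gset x y w) (hHsemi : subsemigroup H)
  (hSH : forall w, S w -> H w) (hS0 : ~~ S [::]) (hWS : all S W)
  (hWuniq : uniq W) (hWup : unique_products H W) j :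
  uniq (Lj S W m j).
Proof.
elim: j => [|j IH]; first by rewrite Lj0 filter_uniq // uniq_Fn.
rewrite LjS.
apply: allpairs_uniq => //.
move=> [w t] [w' t'] /allpairsP[[a b] [/= aW bL [-> ->]]].
move=> /allpairsP[[a' b'] [/= a'W b'L [-> ->]]] /= e.
have [Hb _ _ _] := LjP hxy hHG hHsemi hSH hS0 hWS bL.
have [Hb' _ _ _] := LjP hxy hHG hHsemi hSH hS0 hWS b'L.
by have [-> ->] := hWup a a' b b' aW a'W Hb Hb' e.
Qed.

Lemma sum_Lj (A : finType) (R : realType) (x y : letter A) (H S : pred (word A)) (W : seq (word A)) m
  (hA : (2 <= #|A|)%N)
  (hxy : x != linv y) (hHG : forall w, H w -> Gset x y w) (hHsemi : subsemigroup H)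
  (hSH : forall w, S w -> H w) (hS0 : ~~ S [::]) (hWS : all S W) j :
  \sum_(u <- Lj S W m j) mu_pt R u = (Mconst A R * mu_fin R W) ^+ j * mu_le R S m.
Proof.
elim: j => [|j IH]; first by rewrite Lj0 expr0 mul1r mu_leE big_filter.
rewrite LjS.
transitivity (\sum_(w <- W) \sum_(t <- Lj S W m j) (Mconst A R * mu_pt R w) * mu_pt R t).
  rewrite big_flatten big_map; apply: eq_big_seq => w wW.
  rewrite big_map; apply: eq_big_seq => t tL.
  have [Ht tne _ _] := LjP hxy hHG hHsemi hSH hS0 hWS tL.
  have Sw : S w := allP hWS w wW.
  have Hw := hSH w Sw.
  have wne : w != [::] by apply: contraNneq hS0 => <-.
  by rewrite (@fmul_cat _ _ _ hxy _ _ (hHG _ Hw) (hHG _ Ht) wne tne) mu_pt_cat.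
rewrite (eq_bigr (fun w => (Mconst A R * mu_pt R w) * \sum_(t <- Lj S W m j) mu_pt R t)); last first.
  by move=> w _; rewrite big_distrr.
rewrite -big_distrl /= -big_distrr /= IH /mu_fin exprS.
ring.
Qed.

Set Implicit Arguments. Unset Strict Implicit.

Lemma fold_H (A : finType) (H S : pred (word A)) (W : seq (word A))
  (hHsemi : subsemigroup H) (hSH : forall w, S w -> H w) (hWS : all S W) s ws :
  S s -> all (fun w => w \in W) ws -> H (foldr (@fmul A) s ws).
Proof.
move=> Ss; elim: ws => [|w ws IH] /=; first by move=> _; exact: hSH.
move=> /andP[wW aw]; apply: hHsemi; last exact: IH.
exact: hSH (allP hWS w wW).
Qed.

Lemma fold_disj (A : finType) (x y : letter A) (H S : pred (word A)) (W : seq (word A)) k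
  (hHG : forall w, H w -> Gset x y w) (hHsemi : subsemigroup H)
  (hSH : forall w, S w -> H w) (hWS : all S W)
  (hS : strongly_product_free k S) (hWup : unique_products H W) :
  forall ws s ws' s', S s -> S s' -> all (fun w => w \in W) ws ->
  all (fun w => w \in W) ws' -> (size ws < size ws')%N -> (size ws' < k)%N ->
  foldr (@fmul A) s ws = foldr (@fmul A) s' ws' -> False.
Proof.
elim=> [|w ws IH] s [|w' ws'] s' Ss Ss' aw aw' lt hk e //.
- have h2 : (2 <= (size ws').+2 <= k)%N by apply/andP; split; last exact: hk.
  have := hS _ h2 (w' :: ws' ++ [:: s']).
  rewrite /= size_cat addn1 => /(_ erefl).
  move: aw' => /= /andP[w'W aw'].
  rewrite (allP hWS w' w'W) all_cat /= Ss' andbT.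
  have -> : all S ws' by apply/allP => v vin; apply: (allP hWS); exact: (allP aw').
  move=> /(_ isT); rewrite /Defs.fprod foldr_cat /= (@fmul_nil _ _ _ _ (hHG _ (hSH _ Ss'))).
  by move: e => /= <-; rewrite Ss.
- move: aw aw' e => /= /andP[wW aw] /andP[w'W aw'] e.
  have [_ e'] := hWup w w' _ _ wW w'W (fold_H hHsemi hSH hWS Ss aw)
                   (fold_H hHsemi hSH hWS Ss' aw') e.
  by apply: (IH s ws' s') => //; move: lt hk => /=; lia.
Qed.

Lemma S_nil (A : finType) (S : pred (word A)) k :
  (2 <= k)%N -> strongly_product_free k S -> ~~ S [::].
Proof.
move=> hk hS; apply/negP => S0.
have h2 : (2 <= 2 <= k)%N by rewrite leqnn hk.
have := hS _ h2 [:: [::]; [::]] erefl.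
by move=> /(_ _); rewrite /= S0 => /(_ isT).
Qed.

Lemma main_ineq (A : finType) (R : realType) (x y : letter A) (H S : pred (word A))
  (W : seq (word A)) k
  (hA : (2 <= #|A|)%N) (hxy : x != linv y)
  (hHG : forall w, H w -> Gset x y w) (hHsemi : subsemigroup H)
  (hk : (2 <= k)%N) (hSH : forall w, S w -> H w)
  (hS : strongly_product_free k S) (hWuniq : uniq W) (hWS : all S W)
  (hWup : unique_products H W) m :
  (\sum_(j < k) (Mconst A R * mu_fin R W) ^+ j) * mu_le R S m
    <= mu_le R H (m + k.-1 * Lmax W).
Proof.
have hS0 := S_nil hk hS.
pose Cat := flatten [seq Lj S W m j | j <- iota 0 k].
have uC : uniq Cat.
  apply: uniq_flatten_map; first exact: iota_uniq.
    by move=> j _; exact: uniq_Lj hxy hHG hHsemi hSH hS0 hWS hWuniq hWup j.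
  move=> j j' u; rewrite !mem_iota => /andP[_ jk] /andP[_ j'k] uj uj'; rewrite add0n in jk j'k.
  have [_ _ _ [ws [s [sz aw Ss e]]]] := LjP hxy hHG hHsemi hSH hS0 hWS uj.
  have [_ _ _ [ws' [s' [sz' aw' Ss' e']]]] := LjP hxy hHG hHsemi hSH hS0 hWS uj'.
  case: (ltngtP j j') => // lt; exfalso.
  - apply: (fold_disj hHG hHsemi hSH hWS hS hWup Ss Ss' aw aw'); last by rewrite -e -e'.
      by rewrite sz sz'.
    by rewrite sz'.
  - apply: (fold_disj hHG hHsemi hSH hWS hS hWup Ss' Ss aw' aw); last by rewrite -e -e'.
      by rewrite sz sz'.
    by rewrite sz.
have uF : uniq [seq w <- Fn A (m + k.-1 * Lmax W) | H w] by rewrite filter_uniq // uniq_Fn.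
have sub : {subset Cat <= [seq w <- Fn A (m + k.-1 * Lmax W) | H w]}.
  move=> u /flatten_mapP[j]; rewrite mem_iota => /andP[_ jk] uj; rewrite add0n in jk.
  have [Hu une su _] := LjP hxy hHG hHsemi hSH hS0 hWS uj.
  rewrite mem_filter Hu mem_Fn /=; apply/andP; split.
    by case/orP: (hHG _ Hu) => [/eqP e|/and3P[-> _ _]] //; rewrite e in une.
  apply: leq_trans su _; rewrite leq_add2l; apply: leq_mul => //.
  by rewrite -ltnS (ltn_predK jk).
have := @sub_sum _ R (mu_pt R) _ _ uC uF sub (fun w => mu_pt_ge0 A R w hA).
rewrite big_filter -mu_leE; apply: le_trans; rewrite le_eqVlt; apply/orP; left; apply/eqP.
rewrite big_flatten big_map.
rewrite (eq_bigr (fun j => (Mconst A R * mu_fin R W) ^+ j * mu_le R S m)); last first.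
  by move=> j _; exact: (@sum_Lj A R x y H S W m hA hxy hHG hHsemi hSH hS0 hWS j).
rewrite -big_distrl /=; congr (_ * _).
by rewrite -(big_mkord xpredT (fun j => (Mconst A R * mu_fin R W) ^+ j)) /index_iota subn0.
Qed.

Unset Implicit Arguments. Set Strict Implicit.

Theorem lemma3p1 (R : realType) (A : finType) (hA : (2 <= #|A|)%N)
    (x y : letter A) (hxy : x != linv y)
    (H S : pred (word A)) (W : seq (word A)) (k : nat)
    (hHG : forall w, H w -> Gset x y w)
    (hHsemi : subsemigroup H)
    (hHdense : @dense_in_F A R H)
    (hk : (2 <= k)%N)
    (hSH : forall w, S w -> H w)
    (hS : strongly_product_free k S)
    (hWuniq : uniq W)
    (hWS : all S W)
    (hWup : unique_products H W) :
  (@upper_density A R H S <=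
    (1 / \sum_(i < k) (@mu_fin A R W / @Mconst A R) ^+ i)%:E)%E.
Proof.
have key := main_ineq R hA hxy hHG hHsemi hk hSH hS hWuniq hWS hWup.
set a := Mconst A R * mu_fin R W in key.
set sg := \sum_(j < k) a ^+ j in key.
set c := (k.-1 * Lmax W)%N in key.
have t4 := two_a_ge A R hA.
have M1 : 1 <= Mconst A R.
  by rewrite /Mconst ler_pdivlMr ?mul1r; lra.
have mW0 : 0 <= mu_fin R W by apply: sumr_ge0 => w _; exact: mu_pt_ge0.
have a0 : 0 <= a by rewrite mulr_ge0 //; lra.
have sg1 : 1 <= sg.
  rewrite /sg; case: (k) hk => [//|k'] _; rewrite big_ord_recl expr0 lerDl.
  by apply: sumr_ge0 => i _; exact: exprn_ge0.
have sg0 : 0 < sg by lra.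
have b0 : 0 <= mu_fin R W / Mconst A R by rewrite divr_ge0 //; lra.
set sg' := \sum_(i < k) (mu_fin R W / Mconst A R) ^+ i.
have sg'1 : 1 <= sg'.
  rewrite /sg'; case: (k) hk => [//|k'] _; rewrite big_ord_recl expr0 lerDl.
  by apply: sumr_ge0 => i _; exact: exprn_ge0.
have sgle : sg' <= sg.
  apply: ler_sum => i _; apply: (lerXn2r i); rewrite ?nnegrE //.
  rewrite ler_pdivrMr; last lra.
  rewrite /a -subr_ge0.
  have -> : Mconst A R * mu_fin R W * Mconst A R - mu_fin R W =
            mu_fin R W * ((Mconst A R - 1) * (Mconst A R + 1)) by ring.
  by apply: mulr_ge0 => //; apply: mulr_ge0; lra.
have fin : ((1 / sg)%:E <= (1 / sg')%:E)%E.
  by rewrite lee_fin !div1r lef_pV2 // ?posrE; lra.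
apply: le_trans fin.
have [d [d0 [N hN]]] := hHdense.
apply/lee_addgt0Pr => e e0.
have eps0 : 0 < e * sg * d by rewrite !mulr_gt0.
pose B := c%:R / (e * sg * d).
have B0 : 0 <= B by rewrite /B divr_ge0 // ?ler0n // ltW.
have hB := archi_boundP B0.
set N1 := Num.Def.archi_bound B in hB.
rewrite /upper_density /limn_esup /limf_esup.
apply: (@le_trans _ _ (ereal_sup [set (mu_le R S n / mu_le R H n)%:E | n in [set n | (maxn N N1 <= n)%N]%classic])).
  by apply: ereal_inf_lbound; exists [set n | (maxn N N1 <= n)%N]%classic => //; exists (maxn N N1).
apply: ge_ereal_sup => _ [n /= hn <-].
rewrite -EFinD lee_fin.
have [hNn hN1n] : (N <= n)%N /\ (N1 <= n)%N by move: hn; rewrite geq_max => /andP[].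
have [hlt hpos] := hN n hNn.
rewrite mu_le_true // in hlt hpos.
have F1 : sg * mu_le R S n <= mu_le R H n + c%:R := le_trans (key n) (mu_le_shift _ _ _ _ _ hA).
have hBn : B < n.+1%:R by apply: lt_le_trans hB _; rewrite ler_nat; exact: leqW.
have F2 : c%:R < e * sg * mu_le R H n.
  have : c%:R < n.+1%:R * (e * sg * d) by rewrite -ltr_pdivrMr.
  move=> h1; apply: lt_trans h1 _.
  rewrite -subr_gt0 (_ : _ - _ = (e * sg) * (mu_le R H n - d * n.+1%:R)); last by ring.
  by apply: mulr_gt0; rewrite ?mulr_gt0 // subr_gt0.
set h := mu_le R H n in F1 F2 hlt *.
set s := mu_le R S n in F1 *.
have hp : 0 < h := lt_trans hpos hlt.
rewrite ler_pdivrMr //.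
rewrite -(ler_pM2l sg0).
have -> : sg * ((1 / sg + e) * h) = h + e * sg * h.
  by field; apply/eqP => s0; rewrite s0 ltxx in sg0.
by apply: le_trans F1 _; rewrite lerD2l ltW.
Qed.
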